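(* Let $V$ be a vertex operator superalgebra and $g$ an automorphism of $V$ of finite order. If $M$ is a simple $g\sigma$-twisted $V$-module, then $g\circ M\cong M$. In particular, every simple (untwisted) $V$-module $M$ satisfies $\sigma\circ M\cong M$.
   Context: A vertex operator superalgebra (VOSA) $V=V_{\bar0}\oplus V_{\bar1}$ has the following structure. - Vertex operators $Y(v,z)=\sum v(n)z^{-n-1}$, vacuum $\mathbf1$, and conformal vector $\omega$ with $Y(\omega,z)=\sum L(n)z^{-n-2}$. - The super Jacobi identity holds with sign $\epsilon_{u,v}=(-1)^{\tilde u\tilde v}$. - $V=\bigoplus_{n\in\frac12\mathbb Z}V_n$ by $L(0)$-weight, with $V_{\bar0}$ integral and $V_{\bar1}$ half-integral weights. Automorphisms fix $\mathbf1,\omega$ and satisfy $gY(v,z)g^{-1}=Y(gv,z)$. $\sigma$ is the parity automorphism ($(-1)^i$ on $V_{\bar i}$). For an automorphism $x$ of order $T$, with $T'$ the order of $x\sigma$ and $V^r=\{v:xv=e^{-2\pi ir/T}v\}$: an $x$-twisted module is a space $M$ with $Y_M(v,z)=\sum_{n\in r/T+\mathbb Z}v(n)z^{-n-1}$ for $v\in V^r$, which is truncated, has $Y_M(\mathbf1,z)=\mathrm{id}$, and satisfies $z_0^{-1}\delta(\frac{z_1-z_2}{z_0})Y_M(u,z_1)Y_M(v,z_2)-\epsilon_{u,v}z_0^{-1}\delta(\frac{z_2-z_1}{-z_0})Y_M(v,z_2)Y_M(u,z_1)=z_2^{-1}(\frac{z_1-z_0}{z_2})^{-r/T}\delta(\frac{z_1-z_0}{z_2})Y_M(Y(u,z_0)v,z_2)$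 for $u\in V^r$. It is moreover the direct sum of finite-dimensional $L(0)$-eigenspaces $M_\lambda$ with $M_{\lambda+n/T'}=0$ for $n\ll0$. For $k\in\mathrm{Aut}(V)$, $k\circ M$ is the $kxk^{-1}$-twisted module equal to $M$ as a space with $Y_{k\circ M}(v,z)=Y_M(k^{-1}v,z)$. *)

(* Defs.v *)
From HB Require Import structures.
From mathcomp Require Import all_boot all_algebra.
From mathcomp Require Import reals realfun trigo.
From mathcomp Require Import complex.

Set Implicit Arguments.
Unset Strict Implicit.
Unset Printing Implicit Defensive.

Import GRing.Theory Num.Theory.
Local Open Scope ring_scope.

Section VOSA.

Variable R : realType.
Local Notation C := R[i].

Definition e2pii (q : rat) : C :=
  Complex (cos (2 * pi * ratr q)) (sin (2 * pi * ratr q)).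

Definition binC (a : C) (k : nat) : C :=
  (\prod_(j < k) (a - (j : nat)%:R)) / (k`!)%:R.

Definition is_int (q : rat) : Prop := exists k : int, q = k%:~R.

Definition fin_dim (W : lmodType C) (P : W -> Prop) : Prop :=
  exists b : seq W, (forall x, x \in b -> P x) /\
    forall w, P w -> exists c : nat -> C, w = \sum_(i < size b) c i *: b`_i.

Definition linear_fun (W1 W2 : lmodType C) (f : W1 -> W2) : Prop :=
  forall (a : C) (x y : W1), f (a *: x + y) = a *: f x + f y.

Variable V : lmodType C.

(* Data of a vertex operator superalgebra on V:
   Y u n v = u(n) v  (so Y(u,z)v = \sum_n u(n)v z^{-n-1}), vacuum vac,
   conformal vector om, parity automorphism sig, central charge c. *)
Variables (Y : V -> int -> V -> V) (vac om : V) (sig : V -> V) (c : C).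

Definition Lop (n : int) : V -> V := Y om (n + 1).

Definition wtV (a : rat) (v : V) : Prop := Y om 1 v = ratr a *: v.

Definition par_hom (W : lmodType C) (s : W -> W) (p : bool) (v : W) : Prop :=
  s v = (-1) ^+ p *: v.

Definition is_vosa : Prop :=
  (forall n v, linear_fun (fun u => Y u n v)) /\
  (forall u n, linear_fun (Y u n)) /\
  (forall u v, exists N : int, forall n, N <= n -> Y u n v = 0) /\
  (* vacuum: Y(1,z) = id, Y(v,z)1 \in v + zV[[z]] *)
  (forall n v, Y vac n v = if n == -1 then v else 0) /\
  (forall u, Y u (-1) vac = u) /\
  (forall u (n : int), 0 <= n -> Y u n vac = 0) /\
  linear_fun sig /\
  (forall a v, wtV a v -> is_int a -> sig v = v) /\
  (forall a v, wtV a v -> is_int (a - 1 / 2) -> sig v = - v) /\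
  (forall p q u v n, par_hom sig p u -> par_hom sig q v -> par_hom sig (p (+) q) (Y u n v)) /\
  (* super Jacobi identity, in components (Borcherds identity) *)
  (forall (p q : bool) u v (m n l : int) w (N : nat),
     par_hom sig p u -> par_hom sig q v ->
     (forall i : nat, (N <= i)%N ->
        [/\ Y u (l + i%:Z) v = 0, Y v (n + i%:Z) w = 0 & Y u (m + i%:Z) w = 0]) ->
     \sum_(i < N) binC m%:~R i *: Y (Y u (l + (i : nat)%:Z) v) (m + n - (i : nat)%:Z) w
     = \sum_(i < N) ((-1) ^+ (i : nat) * binC l%:~R i) *:
          (Y u (m + l - (i : nat)%:Z) (Y v (n + (i : nat)%:Z) w)
           - ((-1) ^+ (p && q) * (-1) ^ l) *:
               Y v (n + l - (i : nat)%:Z) (Y u (m + (i : nat)%:Z) w))) /\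
  (forall (m n : int) v,
     Lop m (Lop n v) - Lop n (Lop m v)
     = (m - n)%:~R *: Lop (m + n) v
       + (if m + n == 0 then ((m ^+ 3 - m)%:~R / 12%:R) * c else 0) *: v) /\
  (* L(-1)-derivative property: Y(L(-1)u, z) = d/dz Y(u, z) *)
  (forall u n v, Y (Lop (-1) u) n v = - (n%:~R) *: Y u (n - 1) v) /\
  wtV 2 om /\
  (forall v, exists s : seq (rat * V),
       (forall x, x \in s -> is_int (2 * x.1) /\ wtV x.1 x.2) /\
       v = \sum_(x <- s) x.2) /\
  (forall a, fin_dim (wtV a)) /\
  (exists N : rat, forall a v, a < N -> wtV a v -> v = 0).

Definition is_aut (g ginv : V -> V) : Prop :=
  [/\ linear_fun g, cancel g ginv, cancel ginv g, g vac = vac /\ g om = om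
    & forall u n v, g (Y u n v) = Y (g u) n (g v)].

Definition is_order (W : Type) (x : W -> W) (T : nat) : Prop :=
  [/\ (0 < T)%N, (forall v, iter T x v = v)
    & forall k, (0 < k < T)%N -> exists v, iter k x v <> v].

Definition finite_order (W : Type) (x : W -> W) : Prop := exists T, is_order x T.

(* x-twisted V-module structure Ym on M:  Ym v n w = v(n) w  (n rational),
   so that Y_M(v,z) = \sum_n v(n) z^{-n-1} *)
Definition twisted_module (x : V -> V) (M : lmodType C) (Ym : V -> rat -> M -> M) : Prop :=
  (forall n w, linear_fun (fun v => Ym v n w)) /\
  (forall v n, linear_fun (Ym v n)) /\
  (forall (T r : nat) v, is_order x T -> (r < T)%N ->
     x v = e2pii (- (r%:Q / T%:Q)) *: v ->
     forall n, ~ is_int (n - r%:Q / T%:Q) -> forall w, Ym v n w = 0) /\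
  (forall v w, exists N : rat, forall n, N <= n -> Ym v n w = 0) /\
  (forall n w, Ym vac n w = if n == -1 then w else 0) /\
  (forall (T r : nat) (p q : bool) u v (m n : rat) (l : int) w (N : nat),
     is_order x T -> (r < T)%N -> x u = e2pii (- (r%:Q / T%:Q)) *: u ->
     is_int (m - r%:Q / T%:Q) ->
     par_hom sig p u -> par_hom sig q v ->
     (forall i : nat, (N <= i)%N ->
        [/\ Y u (l + i%:Z) v = 0, Ym v (n + i%:Q) w = 0 & Ym u (m + i%:Q) w = 0]) ->
     \sum_(i < N) binC (ratr m) i *: Ym (Y u (l + (i : nat)%:Z) v) (m + n - (i : nat)%:Q) w
     = \sum_(i < N) ((-1) ^+ (i : nat) * binC l%:~R i) *:
          (Ym u (m + l%:~R - (i : nat)%:Q) (Ym v (n + (i : nat)%:Q) w)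
           - ((-1) ^+ (p && q) * (-1) ^ l) *:
               Ym v (n + l%:~R - (i : nat)%:Q) (Ym u (m + (i : nat)%:Q) w))) /\
  (forall w, exists s : seq (C * M),
       (forall y, y \in s -> Ym om 1 y.2 = y.1 *: y.2) /\
       w = \sum_(y <- s) y.2) /\
  (forall lam : C, fin_dim (fun w => Ym om 1 w = lam *: w)) /\
  (forall T' : nat, is_order (fun v => x (sig v)) T' ->
     forall lam : C, exists N : int, forall n : int, n < N ->
       forall w, Ym om 1 w = (lam + n%:~R / T'%:R) *: w -> w = 0).

Definition submodule (M : lmodType C) (Ym : V -> rat -> M -> M) (P : M -> Prop) : Prop :=
  [/\ P 0, (forall a x y, P x -> P y -> P (a *: x + y))
    & forall v n w, P w -> P (Ym v n w)].

Definition simple_module (M : lmodType C) (Ym : V -> rat -> M -> M) : Prop :=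
  (exists w : M, w <> 0) /\
  forall P, submodule Ym P -> (forall w, P w -> w = 0) \/ (forall w, P w).

Definition mod_iso (M1 M2 : lmodType C) (Y1 : V -> rat -> M1 -> M1)
    (Y2 : V -> rat -> M2 -> M2) : Prop :=
  exists f : M1 -> M2, [/\ linear_fun f, bijective f
    & forall v n w, f (Y1 v n w) = Y2 v n (f w)].

Definition twist_by (kinv : V -> V) (M : lmodType C) (Ym : V -> rat -> M -> M) :
  V -> rat -> M -> M := fun v => Ym (kinv v).

End VOSA.

(* Main.v *)
Require Import Defs.
From HB Require Import structures.
From mathcomp Require Import all_boot all_order all_algebra.
From mathcomp Require Import reals realfun trigo.
From mathcomp Require Import complex.
From mathcomp Require Import boolp.
From mathcomp.analysis Require Import sequences exp.
From mathcomp Require Import ring lra zify.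
Import Order.TTheory GRing.Theory Num.Theory.
Local Open Scope ring_scope.
Section T.
Variable R : realType.
Local Notation C := R[i].
Local Notation e := (e2pii R).

Lemma e2piiD (p q : rat) : e (p + q) = e p * e q.
Proof.
rewrite /e2pii rmorphD mulrDr cosD sinD.
by apply/eqP; rewrite eq_complex /= !eqxx /= addrC eqxx.
Qed.

Lemma e2pii0 : e 0 = 1.
Proof. by rewrite /e2pii rmorph0 mulr0 cos0 sin0. Qed.

Lemma e2pii1 : e 1 = 1.
Proof.
rewrite /e2pii rmorph1 mulr1 mulr_natl cos2pi sin2pi; done.
Qed.

Lemma e2piiN (q : rat) : e (- q) * e q = 1.
Proof. by rewrite -e2piiD addNr e2pii0. Qed.

Lemma e2pii_nat (n : nat) : e n%:R = 1.
Proof.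
elim: n => [|n IH]; first by rewrite e2pii0.
by rewrite -natr1 e2piiD IH e2pii1 mulr1.
Qed.

Lemma e2pii_int (k : int) : e k%:~R = 1.
Proof.
case: k => n; first by rewrite e2pii_nat.
rewrite NegzE mulrNz.
have := e2piiN (n.+1)%:R. by rewrite e2pii_nat mulr1.
Qed.

Lemma e2pii_isint (q : rat) : is_int q -> e q = 1.
Proof. by case=> k ->; apply: e2pii_int. Qed.

Lemma e2pii_half : e (1 / 2) = -1.
Proof.
rewrite /e2pii mul1r fmorphV /= ratr_nat.
have -> : 2 * pi * (2%:R)^-1 = pi :> R.
  by rewrite mulrC mulrA mulVf ?mul1r // pnatr_eq0.
rewrite cospi sinpi.
by apply/eqP; rewrite eq_complex /= oppr0 !eqxx.
Qed.

Lemma e2pii_neq1 (q : rat) : 0 < q < 1 -> e q != 1.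
Proof.
move=> /andP[q0 q1]; rewrite /e2pii; apply/negP => /eqP[hcos].
set x := 2 * pi * ratr q.
have hq : 0 < (ratr q : R) by rewrite ltr0q.
have hq1 : (ratr q : R) < 1 by rewrite -(rmorph1 (ratr : rat -> R)) ltr_rat.
have x0 : 0 < x by apply: mulr_gt0 => //; apply: mulr_gt0 => //; exact: pi_gt0.
have x1 : x < pi *+ 2.
  by rewrite /x mulr_natl gtr_pMr // mulrn_wgt0 // pi_gt0.
case: (ltgtP x pi) => xp.
- by move=> h; have := sin_gt0_pi (x:=x); rewrite x0 xp h ltxx => /(_ isT).
- move=> h; have : sin (x - pi + pi) = 0 by rewrite subrK.
  rewrite sinDpi => /eqP; rewrite oppr_eq0 => /eqP h2.
  have := sin_gt0_pi (x:=x - pi); rewrite h2 ltxx subr_gt0 xp /=.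
  by rewrite ltrBlDr -mulr2n x1 => /(_ isT).
- move=> _; move: hcos; rewrite -/x xp cospi => h; have : (2:R) == 0 by rewrite -[2]/(1+1) -{1}h addNr.
  by rewrite pnatr_eq0.
Qed.

Definition Ec (z : C) : C :=
  Complex (expR (- (2 * pi * complex.Im z)) * cos (2 * pi * complex.Re z))
          (expR (- (2 * pi * complex.Im z)) * sin (2 * pi * complex.Re z)).

Lemma EcD z1 z2 : Ec (z1 + z2) = Ec z1 * Ec z2.
Proof.
case: z1 => a b; case: z2 => c d; rewrite /Ec /=.
rewrite !mulrDr opprD expRD cosD sinD.
apply/eqP; rewrite eq_complex /=; apply/andP; split; apply/eqP; ring.
Qed.

Lemma Ec0 : Ec 0 = 1.
Proof.
by rewrite /Ec /= !mulr0 oppr0 expR0 cos0 sin0 mulr1 mulr0.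
Qed.

Lemma EcN z : Ec (- z) * Ec z = 1.
Proof. by rewrite -EcD addNr Ec0. Qed.

Lemma ratrC (q : rat) : (ratr q : C) = real_complex R (ratr q : R).
Proof. by rewrite -(fmorph_rat (real_complex R)). Qed.

Lemma Ec_rat (q : rat) : Ec (ratr q) = e q.
Proof.
rewrite ratrC /Ec /= mulr0 oppr0 expR0 !mul1r //.
Qed.

Lemma EcDrat z (q : rat) : Ec (z + ratr q) = Ec z * e q.
Proof. by rewrite EcD Ec_rat. Qed.
End T.

Set Implicit Arguments.
Unset Strict Implicit.
Section B.
Variable R : realType.
Local Notation C := R[i].

Section LF.
Variables (W1 W2 : lmodType C) (f : W1 -> W2) (hf : linear_fun f).
Lemma lfD x y : f (x + y) = f x + f y.
Proof. by rewrite -{1}[x]scale1r hf scale1r. Qed.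
Lemma lf0 : f 0 = 0.
Proof. have h := lfD 0 0; rewrite addr0 in h; by apply: (addrI (f 0)); rewrite -h addr0. Qed.
Lemma lfZ a x : f (a *: x) = a *: f x.
Proof. by rewrite -[a *: x]addr0 hf lf0 addr0. Qed.
Lemma lfN x : f (- x) = - f x.
Proof. by rewrite -scaleN1r lfZ scaleN1r. Qed.
Lemma lfB x y : f (x - y) = f x - f y.
Proof. by rewrite lfD lfN. Qed.
Lemma lf_sum I (r : seq I) (P : pred I) (F : I -> W1) :
  f (\sum_(i <- r | P i) F i) = \sum_(i <- r | P i) f (F i).
Proof. exact: (big_morph f lfD lf0). Qed.
End LF.

Section Eig.
Variables (M : lmodType C) (L : M -> M) (hL : linear_fun L).

Definition decomp (w : M) (s : seq (C * M)) :=
  (forall y, y \in s -> L y.2 = y.1 *: y.2) /\ w = \sum_(y <- s) y.2.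

Lemma eig_indep (s : seq (C * M)) :
  (forall y, y \in s -> L y.2 = y.1 *: y.2) -> \sum_(y <- s) y.2 = 0 ->
  forall h : C -> C, \sum_(y <- s) h y.1 *: y.2 = 0.
Proof.
move: {2}(size s) (leqnn (size s)) => n; elim: n s => [|n IH] [|[l0 v0] s] //=.
- by move=> _ _ _ h; rewrite big_nil.
- by move=> _ _ _ h; rewrite big_nil.
rewrite ltnS => hsz hs; rewrite big_cons /= => /eqP; rewrite addr_eq0 => /eqP hv0 h.
have hs' : forall y, y \in s -> L y.2 = y.1 *: y.2.
  by move=> y ys; apply: hs; rewrite inE ys orbT.
have hl0 : L v0 = l0 *: v0 by apply: (hs (l0, v0)); rewrite inE eqxx.
pose t := [seq (y.1, (y.1 - l0) *: y.2) | y <- s].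
have ht : forall y, y \in t -> L y.2 = y.1 *: y.2.
  move=> y /mapP[z zs ->] /=; rewrite lfZ // hs' // !scalerA mulrC //.
have e1 : \sum_(y <- s) y.1 *: y.2 = L (\sum_(y <- s) y.2).
  by rewrite lf_sum //; apply: eq_big_seq => y ys; rewrite hs'.
have hsumt : \sum_(y <- t) y.2 = 0.
  rewrite big_map /=.
  under eq_bigr => y _ do rewrite scalerBl.
  have hS : \sum_(y <- s) y.2 = - v0 by rewrite hv0 opprK.
  by rewrite sumrB e1 -scaler_sumr hS lfN // hl0 scalerN opprK addNr.
have := IH t _ ht hsumt (fun l => if l == l0 then 0 else (h l - h l0) / (l - l0)).
rewrite size_map => /(_ hsz); rewrite big_map /= => H.
rewrite big_cons /= hv0 scalerN scaler_sumr addrC -sumrB -[RHS]H.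
apply: eq_bigr => y _; rewrite -scalerBl scalerA.
case: eqP => [->|/eqP ne]; first by rewrite subrr mul0r scale0r.
by rewrite mulfVK // subr_eq0.
Qed.

Definition Fmap (h : C -> C) (w : M) : M :=
  match pselect (exists s, decomp w s) with
  | left H => \sum_(y <- projT1 (cid H)) h y.1 *: y.2
  | right _ => 0
  end.

Lemma Fmap_eq h w s : decomp w s -> Fmap h w = \sum_(y <- s) h y.1 *: y.2.
Proof.
move=> [hs hw]; rewrite /Fmap; case: pselect => [H|[]]; last by exists s.
case: (cid H) => s0 [hs0 hw0] /=.
pose u := s0 ++ [seq (y.1, - y.2) | y <- s].
have hu : forall y, y \in u -> L y.2 = y.1 *: y.2.
  move=> y; rewrite mem_cat => /orP[/hs0 //|/mapP[z zs ->] /=].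
  by rewrite lfN // hs // scalerN.
have hsu : \sum_(y <- u) y.2 = 0.
  by rewrite big_cat big_map /= sumrN -hw0 -hw subrr.
have := eig_indep hu hsu h.
rewrite big_cat big_map /=; under [X in _ + X = _]eq_bigr do rewrite scalerN.
by rewrite sumrN => /eqP; rewrite subr_eq0 => /eqP.
Qed.

Hypothesis hdec : forall w, exists s, decomp w s.

Lemma Fmap_lin h : linear_fun (Fmap h).
Proof.
move=> a x y; have [sx hx] := hdec x; have [sy hy] := hdec y.
rewrite (Fmap_eq h hx) (Fmap_eq h hy).
rewrite (@Fmap_eq h _ ([seq (z.1, a *: z.2) | z <- sx] ++ sy)).
  rewrite big_cat big_map /= scaler_sumr; congr (_ + _).
  by apply: eq_bigr => z _; rewrite !scalerA mulrC.
case: hx => hx1 hx2; case: hy => hy1 hy2; split.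
  move=> z; rewrite mem_cat => /orP[/mapP[u us ->] /=|/hy1 //].
  by rewrite lfZ // hx1 // !scalerA mulrC.
by rewrite big_cat big_map /= hx2 hy2 scaler_sumr.
Qed.

Lemma Fmap_eig h l w : L w = l *: w -> Fmap h w = h l *: w.
Proof.
move=> hw; rewrite (@Fmap_eq h _ [:: (l, w)]) ?big_seq1 //.
split; last by rewrite big_seq1.
by move=> y; rewrite inE => /eqP ->.
Qed.

Lemma Fmap_can h h' : (forall l, h' l * h l = 1) -> cancel (Fmap h) (Fmap h').
Proof.
move=> hh w; have [s [hs hw]] := hdec w.
rewrite (@Fmap_eq h _ s) //.
rewrite (@Fmap_eq h' _ [seq (y.1, h y.1 *: y.2) | y <- s]).
  rewrite big_map /= hw; apply: eq_bigr => y _; by rewrite scalerA hh scale1r.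
split; last by rewrite big_map.
move=> z /mapP[u us ->] /=; by rewrite lfZ // hs // !scalerA mulrC.
Qed.
End Eig.
End B.


Lemma nat_big (q : rat) : exists N : nat, forall i : nat, (N <= i)%N -> q <= i%:R.
Proof.
exists (Num.bound `|q|) => i hi.
apply: (le_trans (ler_norm q)); apply: (le_trans (ltW (archi_boundP (normr_ge0 q)))).
by rewrite ler_nat.
Qed.

Lemma half_cases (a : rat) : is_int (2 * a) -> is_int a \/ is_int (a - 1 / 2).
Proof.
move=> [k hk]; have ha : a = k%:~R / 2 by rewrite -hk; field.
have := divz_eq k 2; set d := (k %/ 2)%Z; set r := (k %% 2)%Z => hkd.
have r0 : 0 <= r by apply: modz_ge0.
have r2 : r < 2 by apply: ltz_pmod.
have : r = 0 \/ r = 1 by lia.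
case=> hr.
- left; exists d; rewrite ha hkd hr addr0 intrM /=; by field.
- right; exists d; rewrite ha hkd hr intrD intrM /=; by field.
Qed.

Section C.
Variable R : realType.
Local Notation C := R[i].
Variable V : lmodType C.
Variables (Y : V -> int -> V -> V) (vac om : V) (sig : V -> V) (c : C).
Hypothesis hV : is_vosa Y vac om sig c.

Lemma linY1 n v : linear_fun (fun u => Y u n v).
Proof. case: hV => h _; exact: h. Qed.
Lemma linY2 u n : linear_fun (Y u n).
Proof. case: hV => _ [] h _; exact: h. Qed.
Lemma truncV u v : exists N : int, forall n, N <= n -> Y u n v = 0.
Proof. case: hV => _ [] _ [] h _; exact: h. Qed.
Lemma vacY n v : Y vac n v = if n == -1 then v else 0.
Proof. case: hV => _ [] _ [] _ [] h _; exact: h. Qed.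
Lemma creat u : Y u (-1) vac = u.
Proof. case: hV => _ [] _ [] _ [] _ [] h _; exact: h. Qed.
Lemma Yvac_pos u (n : int) : 0 <= n -> Y u n vac = 0.
Proof. case: hV => _ [] _ [] _ [] _ [] _ [] h _; exact: h. Qed.
Lemma linsig : linear_fun sig.
Proof. case: hV => _ [] _ [] _ [] _ [] _ [] _ [] h _; exact: h. Qed.
Lemma sig_int a v : wtV Y om a v -> is_int a -> sig v = v.
Proof. case: hV => _ [] _ [] _ [] _ [] _ [] _ [] _ [] h _; exact: h. Qed.
Lemma sig_half a v : wtV Y om a v -> is_int (a - 1 / 2) -> sig v = - v.
Proof. case: hV => _ [] _ [] _ [] _ [] _ [] _ [] _ [] _ [] h _; exact: h. Qed.
Lemma par_Y p q u v n : par_hom sig p u -> par_hom sig q v -> par_hom sig (p (+) q) (Y u n v).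
Proof. case: hV => _ [] _ [] _ [] _ [] _ [] _ [] _ [] _ [] _ [] h _; exact: h. Qed.
Lemma derivY u n v : Y (Lop Y om (-1) u) n v = - (n%:~R) *: Y u (n - 1) v.
Proof. case: hV => _ [] _ [] _ [] _ [] _ [] _ [] _ [] _ [] _ [] _ [] _ [] _ [] h _; exact: h. Qed.
Lemma wt_om : wtV Y om 2 om.
Proof. case: hV => _ [] _ [] _ [] _ [] _ [] _ [] _ [] _ [] _ [] _ [] _ [] _ [] _ [] h _; exact: h. Qed.
Lemma decV v : exists s : seq (rat * V),
       (forall x, x \in s -> is_int (2 * x.1) /\ wtV Y om x.1 x.2) /\
       v = \sum_(x <- s) x.2.
Proof. case: hV => _ [] _ [] _ [] _ [] _ [] _ [] _ [] _ [] _ [] _ [] _ [] _ [] _ [] _ [] h _; exact: h. Qed.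


Definition eps (a : rat) : C := if `[< is_int a >] then 1 else -1.

Lemma eps2 a : eps a * eps a = 1.
Proof. by rewrite /eps; case: ifP; rewrite ?mulr1 ?mulrNN ?mulr1. Qed.

Lemma eps_par a : eps a = (-1) ^+ (~~ `[< is_int a >]).
Proof. by rewrite /eps; case: ifP. Qed.

Lemma wt_sig a v : wtV Y om a v -> is_int (2 * a) -> sig v = eps a *: v.
Proof.
move=> hw h2; rewrite /eps; case: asboolP => hi.
  by rewrite scale1r (sig_int hw hi).
case: (half_cases h2) => // hh; by rewrite (sig_half hw hh) scaleN1r.
Qed.

Lemma wt_par a v : wtV Y om a v -> is_int (2 * a) ->
  par_hom sig (~~ `[< is_int a >]) v.
Proof. by move=> hw h2; rewrite /par_hom -eps_par (wt_sig hw h2). Qed.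

Lemma wt_lin a k v w : wtV Y om a v -> wtV Y om a w -> wtV Y om a (k *: v + w).
Proof.
by rewrite /wtV => hv hw; rewrite linY2 hv hw scalerDr !scalerA mulrC.
Qed.

Lemma wt0 a : wtV Y om a 0.
Proof. by rewrite /wtV (lf0 (linY2 _ _)) scaler0. Qed.

Lemma wtZ a k v : wtV Y om a v -> wtV Y om a (k *: v).
Proof. by move=> h; rewrite -[k *: v]addr0; apply: wt_lin => //; apply: wt0. Qed.

Lemma wtD a v w : wtV Y om a v -> wtV Y om a w -> wtV Y om a (v + w).
Proof. by move=> h1 h2; rewrite -[v]scale1r; apply: wt_lin. Qed.

Lemma sig_wt a v : wtV Y om a v -> is_int (2 * a) -> wtV Y om a (sig v).
Proof. by move=> h1 h2; rewrite (wt_sig h1 h2); apply: wtZ. Qed.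

Lemma sig_om : sig om = om.
Proof. by apply: (sig_int wt_om); exists 2. Qed.

Lemma wt_vac : wtV Y om 0 vac.
Proof. by rewrite /wtV Yvac_pos // rmorph0 scale0r. Qed.

Lemma sig_vac : sig vac = vac.
Proof. by apply: (sig_int wt_vac); exists 0. Qed.

Lemma sigK v : sig (sig v) = v.
Proof.
have [s [hs ->]] := decV v.
rewrite (lf_sum linsig) (lf_sum linsig); apply: eq_big_seq => y ys.
have [h2 hw] := hs y ys.
by rewrite (wt_sig hw h2) (lfZ linsig) (wt_sig hw h2) scalerA eps2 scale1r.
Qed.

Lemma e2pii_eps a : is_int (2 * a) -> e2pii R a = eps a.
Proof.
move=> h2; rewrite /eps; case: asboolP => hi; first exact: e2pii_isint.
case: (half_cases h2) => // hh.
have -> : a = (a - 1 / 2) + 1 / 2 by rewrite subrK.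
by rewrite e2piiD e2pii_isint // e2pii_half mul1r.
Qed.

Section Aut.
Variables (g ginv : V -> V).
Hypotheses (hg : linear_fun g) (hgK : cancel g ginv) (hginvK : cancel ginv g)
  (hgom : g om = om) (hgY : forall u n v, g (Y u n v) = Y (g u) n (g v)).

Lemma g_wt a v : wtV Y om a v -> wtV Y om a (g v).
Proof. by rewrite /wtV => h; rewrite -hgom -hgY h (lfZ hg). Qed.

Lemma ginv_lin : linear_fun ginv.
Proof.
move=> k u v; apply: (can_inj hgK).
by rewrite hg !hginvK.
Qed.

Lemma g_sig v : g (sig v) = sig (g v).
Proof.
have [s [hs ->]] := decV v.
rewrite (lf_sum linsig) !(lf_sum hg) (lf_sum linsig); apply: eq_big_seq => y ys.
have [h2 hw] := hs y ys.
by rewrite (wt_sig hw h2) (lfZ hg) (wt_sig (g_wt hw) h2).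
Qed.

Lemma iter_sig_g n w : iter n sig (g w) = g (iter n sig w).
Proof. by elim: n => [//|n IH] /=; rewrite IH g_sig. Qed.

Lemma iter_x n v : iter n (fun v => g (sig v)) v = iter n g (iter n sig v).
Proof.
elim: n v => [//|n IH] v; rewrite iterSr IH [RHS]iterSr.
by congr (iter n g _); rewrite iter_sig_g iterSr.
Qed.
End Aut.
End C.

Lemma exists_order (W : Type) (f : W -> W) N : (0 < N)%N ->
  (forall v, iter N f v = v) -> exists T, is_order f T.
Proof.
move=> N0 hN.
have hex : exists k, (0 < k)%N && `[< forall v, iter k f v = v >].
  by exists N; rewrite N0 /=; apply/asboolP.
case: (ex_minnP hex) => T /andP[T0 /asboolP hT] hmin.
exists T; split => // k /andP[k0 kT].
apply/existsNP => hk.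
have := hmin k; rewrite k0 /=.
have -> : `[< forall v, iter k f v = v >] by apply/asboolP.
by move=> /(_ isT); rewrite leqNgt kT.
Qed.


Ltac prem J := let HP := fresh in match type of J with ?P -> _ => assert (HP : P); [|specialize (J HP); clear HP] end.

Lemma int_big (q : int) : exists N : nat, forall i : nat, (N <= i)%N -> q <= i%:Z.
Proof. exists `|q|%N => i hi; lia. Qed.

Section D.
Variable R : realType.
Local Notation C := R[i].
Variable V : lmodType C.
Variables (Y : V -> int -> V -> V) (vac om : V) (sig : V -> V) (c : C).
Hypothesis hV : is_vosa Y vac om sig c.
Variables (M : lmodType C) (Ym : V -> rat -> M -> M) (x : V -> V) (T : nat).
Hypotheses (hM : twisted_module Y vac om sig x Ym) (hT : is_order x T) (hxom : x om = om).

Lemma linYm1 n w : linear_fun (fun v => Ym v n w). Proof. case: hM => h _; exact: h. Qed.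
Lemma linYm2 v n : linear_fun (Ym v n). Proof. case: hM => _ [] h _; exact: h. Qed.
Lemma modesM r v : (r < T)%N -> x v = e2pii R (- (r%:Q / T%:Q)) *: v ->
     forall n, ~ is_int (n - r%:Q / T%:Q) -> forall w, Ym v n w = 0.
Proof. case: hM => _ [] _ [] h _; exact: h. Qed.
Lemma truncM v w : exists N : rat, forall n, N <= n -> Ym v n w = 0.
Proof. case: hM => _ [] _ [] _ [] h _; exact: h. Qed.
Lemma vacM n w : Ym vac n w = if n == -1 then w else 0.
Proof. case: hM => _ [] _ [] _ [] _ [] h _; exact: h. Qed.
Lemma JacM (r : nat) (p q : bool) u v (m n : rat) (l : int) w (N : nat) :
     (r < T)%N -> x u = e2pii R (- (r%:Q / T%:Q)) *: u ->
     is_int (m - r%:Q / T%:Q) ->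
     par_hom sig p u -> par_hom sig q v ->
     (forall i : nat, (N <= i)%N ->
        [/\ Y u (l + i%:Z) v = 0, Ym v (n + i%:Q) w = 0 & Ym u (m + i%:Q) w = 0]) ->
     \sum_(i < N) binC (ratr m) i *: Ym (Y u (l + (i : nat)%:Z) v) (m + n - (i : nat)%:Q) w
     = \sum_(i < N) ((-1) ^+ (i : nat) * binC l%:~R i) *:
          (Ym u (m + l%:~R - (i : nat)%:Q) (Ym v (n + (i : nat)%:Q) w)
           - ((-1) ^+ (p && q) * (-1) ^ l) *:
               Ym v (n + l%:~R - (i : nat)%:Q) (Ym u (m + (i : nat)%:Q) w)).
Proof. case: hM => _ [] _ [] _ [] _ [] _ [] h _; exact: h. Qed.
Lemma decM w : exists s : seq (C * M),
       (forall y, y \in s -> Ym om 1 y.2 = y.1 *: y.2) /\ w = \sum_(y <- s) y.2.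
Proof. case: hM => _ [] _ [] _ [] _ [] _ [] _ [] h _; exact: h. Qed.

Lemma Ym0 n w : Ym 0 n w = 0.
Proof. exact: (lf0 (linYm1 n w)). Qed.
Lemma Ym_0 v n : Ym v n 0 = 0.
Proof. exact: (lf0 (linYm2 v n)). Qed.

Lemma binC0 a : binC a 0 = 1 :> C.
Proof. by rewrite /binC big_ord0 divr1. Qed.
Lemma binC1 a : binC a 1 = a :> C.
Proof. by rewrite /binC big_ord1 subr0 divr1. Qed.

Lemma natQ (i : nat) : (i%:~R : rat) = i%:R.
Proof. by rewrite pmulrn. Qed.

Lemma natQ_neqN1 (i : nat) : (i%:R : rat) != -1.
Proof. by apply/negP => /eqP h; have := ler0n rat i; rewrite h; lra. Qed.

Lemma modL1 (r : nat) u m w p : (r < T)%N -> x u = e2pii R (- (r%:Q / T%:Q)) *: u ->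
  is_int (m - r%:Q / T%:Q) -> par_hom sig p u ->
  Ym (Y om 0 u) m w = - ratr m *: Ym u (m - 1) w.
Proof.
move=> rT hx hm hp.
have [N0 hN0] := truncM u w.
have [N1 hN1] := nat_big (N0 - m).
have := @JacM r p false u vac m 0 (-2) w N1.+2 rT hx hm hp.
rewrite /par_hom (sig_vac hV) expr0 scale1r => /(_ erefl).
have hvac : forall (i : nat), Ym vac (0 + i%:~R) w = 0.
  by move=> i; rewrite vacM natQ add0r (negbTE (natQ_neqN1 i)).
have hvac2 : forall (i : nat) z, Ym vac (0 + (-2)%:~R - i%:~R) z = 0.
  move=> i z; rewrite vacM ifF //; apply/negP => /eqP.
  rewrite natQ add0r => h; have := ler0n rat i; move: h; lra.
move=> J; prem J.
  move=> i hi; split.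
  - by apply: (Yvac_pos hV); lia.
  - exact: hvac.
  - apply: hN0; rewrite natQ; have := hN1 i; rewrite -lerBlDl.
    by apply; apply: (leq_trans _ hi); rewrite ltnW // ltnW.
move: J; rewrite [in X in _ = X -> _]big1; last first.
  by move=> i _; rewrite hvac hvac2 Ym_0 scaler0 subr0 scaler0.
rewrite big_ord_recl big_ord_recl big1; last first.
  move=> i _ /=; rewrite (Yvac_pos hV) ?Ym0 ?scaler0 //.
rewrite /= !natQ binC0 binC1 !addr0 scale1r.
have -> : bump 0 0 = 1%N by [].
have -> : (-2 + 1 : int) = -1 by [].
rewrite (creat hV).
have hd : Y om 0 u = Y u (-2) vac.
  have := derivY hV u (-1) vac; rewrite (creat hV) /Lop.
  have -> : (-1 + 1 : int) = 0 by [].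
  have -> : (-1 - 1 : int) = -2 by [].
  by rewrite mulrN1z opprK scale1r.
rewrite hd => /eqP; rewrite addr_eq0 => /eqP ->.
by rewrite scaleNr.
Qed.

Lemma binC1S2 i : binC (1 : C) i.+2 = 0.
Proof. by rewrite /binC big_ord_recl big_ord_recl /= subrr mul0r mulr0 mul0r. Qed.
Lemma binC0S i : binC (0 : C) i.+1 = 0.
Proof. by rewrite /binC big_ord_recl /= subrr mul0r mul0r. Qed.

Lemma T_gt0 : (0 < T)%N. Proof. by case: hT. Qed.

Lemma comm_L0 (r : nat) a u n w lam : (r < T)%N ->
  x u = e2pii R (- (r%:Q / T%:Q)) *: u -> is_int (n - r%:Q / T%:Q) ->
  wtV Y om a u -> is_int (2 * a) -> Ym om 1 w = lam *: w ->
  Ym om 1 (Ym u n w) = (lam + ratr (a - n - 1)) *: Ym u n w.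
Proof.
move=> rT hx hn hwt h2 hw.
have hp := wt_par hV hwt h2.
have [N0 hN0] := truncV hV om u.
have [N1 hN1] := truncM u w.
have [N2 hN2] := truncM om w.
have [K0 hK0] := int_big N0.
have [K1 hK1] := nat_big (N1 - n).
have [K2 hK2] := nat_big (N2 - 1).
set K := maxn K0 (maxn K1 K2).
have hxom' : x om = e2pii R (- ((0%N)%:Q / T%:Q)) *: om.
  by rewrite natQ mul0r oppr0 e2pii0 scale1r.
have hi1 : is_int (1 - (0%N)%:Q / T%:Q) by exists 1; rewrite natQ mul0r subr0.
have hpom : par_hom sig false om by rewrite /par_hom expr0 scale1r (sig_om hV).
have := @JacM 0 false _ om u 1 n 0 w K.+2 T_gt0 hxom' hi1 hpom hp.
move=> J; prem J.
  move=> i hi; have hKi : (K <= i)%N by apply: (leq_trans _ hi); rewrite ltnW // ltnW.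
  split.
  - apply: hN0; rewrite add0r; apply: hK0; apply: (leq_trans _ hKi).
    by rewrite /K leq_maxl.
  - apply: hN1; rewrite natQ -lerBlDl; apply: hK1; apply: (leq_trans _ hKi).
    by rewrite /K leq_max leq_maxl orbT.
  - apply: hN2; rewrite natQ -lerBlDl; apply: hK2; apply: (leq_trans _ hKi).
    by rewrite /K leq_max leq_maxr orbT.
move: J; rewrite [in X in _ = X -> _]big_ord_recl [in X in _ = X -> _]big1; last first.
  by move=> i _; rewrite /= mulr0z binC0S mulr0 scale0r.
rewrite big_ord_recl big_ord_recl big1; last first.
  by move=> i _; rewrite rmorph1 binC1S2 scale0r.
rewrite /= !natQ !mulr0z binC0 binC1 rmorph1 !expr0 mul1r !scale1r ?addr0 ?mulr0n ?subr0 ?add0r ?expr0z ?mulr1.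
rewrite binC0 scale1r hw (lfZ (linYm2 u n)) hwt.
have hn1 : is_int (1 + n - r%:Q / T%:Q).
  by case: hn => k hk; exists (1 + k); rewrite -addrA hk intrD.
rewrite (@modL1 r u (1 + n) w _ rT hx hn1 hp).
have -> : 1 + n - 1 = n by rewrite addrAC subrr add0r.
have -> : Ym (ratr a *: u) n w = ratr a *: Ym u n w by exact: (lfZ (linYm1 n w)).
rewrite scale1r => E; rewrite -[Ym om 1 _](subrK (lam *: Ym u n w)) -E.
rewrite -!scalerDl; congr (_ *: _).
rewrite !rmorphB rmorphD rmorph1; ring.
Qed.
End D.


Section E.
Variable R : realType.
Local Notation C := R[i].
Local Notation e := (e2pii R).

Lemma e2pii_natM (k : nat) (q : rat) : e (k%:R * q) = e q ^+ k.
Proof.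
elim: k => [|k IH]; first by rewrite mul0r e2pii0 expr0.
by rewrite -natr1 mulrDl mul1r e2piiD IH exprSr.
Qed.

Variables (W : lmodType C) (x : W -> W) (hx : linear_fun x) (T : nat)
  (T0 : (0 < T)%N) (hT : forall v, iter T x v = v).

Definition zeta (r : nat) : C := e (r%:R / T%:R).

Definition Pr (r : nat) (u : W) : W :=
  (T%:R : C)^-1 *: \sum_(k < T) (zeta r ^+ k) *: iter k x u.

Lemma zetaT r : zeta r ^+ T = 1.
Proof.
rewrite /zeta -e2pii_natM mulrC mulfVK ?pnatr_eq0 -?lt0n //.
exact: e2pii_nat.
Qed.

Lemma sum_shift (F : nat -> W) n : F n = F 0%N ->
  \sum_(k < n) F k.+1 = \sum_(k < n) F k.
Proof.
case: n => [|n] h; first by rewrite !big_ord0.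
rewrite big_ord_recr big_ord_recl /= addrC h; congr (_ + _).
Qed.

Lemma zetaN r : e (- (r%:R / T%:R)) * zeta r = 1.
Proof. exact: e2piiN. Qed.

Lemma P_eig r u : x (Pr r u) = e (- (r%:R / T%:R)) *: Pr r u.
Proof.
rewrite /Pr (lfZ hx) (lf_sum hx) scalerA mulrC -scalerA; congr (_ *: _).
set f := fun k : nat => zeta r ^+ k *: iter k x u.
have -> : \sum_(k < T) x (zeta r ^+ k *: iter k x u) =
          e (- (r%:R / T%:R)) *: \sum_(k < T) f k.+1.
  rewrite scaler_sumr; apply: eq_bigr => k _.
  rewrite (lfZ hx) -iterS /f scalerA; congr (_ *: _).
  by rewrite exprS mulrA zetaN mul1r.
congr (_ *: _).
apply: sum_shift; by rewrite /f hT zetaT expr0.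
Qed.

Lemma geom_sum (k : nat) : (k < T)%N ->
  \sum_(r < T) zeta r ^+ k = if k == 0%N then T%:R else 0.
Proof.
move=> kT; case: eqP => [->|/eqP k0].
  by rewrite (eq_bigr (fun _ => 1)) ?sumr_const ?card_ord // => r _; rewrite expr0.
set z := e (k%:R / T%:R).
have hz : forall r : nat, zeta r ^+ k = z ^+ r.
  by move=> r; rewrite /zeta /z -!e2pii_natM mulrCA.
under eq_bigr do rewrite hz.
have zT : z ^+ T = 1.
  rewrite /z -e2pii_natM mulrC mulfVK ?pnatr_eq0 -?lt0n //; exact: e2pii_nat.
have z1 : z != 1.
  apply: e2pii_neq1; apply/andP; split.
    by apply: divr_gt0; rewrite ltr0n // lt0n.
  by rewrite ltr_pdivrMr ?ltr0n // mul1r ltr_nat.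
have := subrX1 z T; rewrite zT subrr => /esym/eqP; rewrite mulf_eq0 subr_eq0 (negbTE z1) /=.
by move/eqP.
Qed.

Lemma P_sum u : \sum_(r < T) Pr r u = u.
Proof.
rewrite /Pr -scaler_sumr.
rewrite exchange_big /=.
under eq_bigr do rewrite -scaler_suml geom_sum ?ltn_ord //.
rewrite (bigD1 (Ordinal T0)) //= big1 ?addr0; last first.
  move=> i hi; case: eqP => [hi0|]; last by rewrite scale0r.
  by move: hi; have -> : i = Ordinal T0 by apply: val_inj.
by rewrite scalerA mulVf ?pnatr_eq0 -?lt0n // scale1r.
Qed.

Lemma P_closed (Q : W -> Prop) : Q 0 -> (forall k v, Q v -> Q (k *: v)) ->
  (forall v w, Q v -> Q w -> Q (v + w)) -> (forall v, Q v -> Q (x v)) ->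
  forall r u, Q u -> Q (Pr r u).
Proof.
move=> Q0 QZ QD Qx r u Qu; apply: (QZ).
have Qit : forall k, Q (iter k x u) by elim=> [//|k IH]; rewrite iterS; apply: Qx.
elim/big_ind: _ => //.
by move=> k _; apply: (QZ).
Qed.
End E.


Section F.
Variable R : realType.
Local Notation C := R[i].
Variable V : lmodType C.
Variables (Y : V -> int -> V -> V) (vac om : V) (sig : V -> V) (c : C).
Hypothesis hV : is_vosa Y vac om sig c.
Variables (g ginv : V -> V).
Hypotheses (hg : linear_fun g) (hgK : cancel g ginv) (hginvK : cancel ginv g)
  (hgom : g om = om)
  (hgwt : forall a v, wtV Y om a v -> is_int (2 * a) -> wtV Y om a (g v)).
Variables (M : lmodType C) (Ym : V -> rat -> M -> M) (x : V -> V) (T : nat).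
Hypotheses (hxdef : forall v, x v = g (sig v))
  (hM : twisted_module Y vac om sig x Ym) (hT : is_order x T).

Lemma hxom : x om = om.
Proof. by rewrite hxdef (sig_om hV) hgom. Qed.

Lemma x_lin : linear_fun x.
Proof. by move=> k u v; rewrite !hxdef (linsig hV) hg. Qed.

Lemma ginv_lin' : linear_fun ginv.
Proof. by move=> k u v; apply: (can_inj hgK); rewrite hg !hginvK. Qed.

Local Notation L := (Ym om 1).
Local Notation F := (Fmap L (@Ec R)).

Lemma hL : linear_fun L. Proof. exact: (linYm2 hM). Qed.
Lemma hdec : forall w, exists s, decomp L w s. Proof. exact: (decM hM). Qed.
Lemma F_lin : linear_fun F. Proof. exact: (Fmap_lin hL hdec). Qed.

Lemma ginv_eig a u (q : rat) : wtV Y om a u -> is_int (2 * a) ->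
  x u = e2pii R (- q) *: u -> ginv u = (eps R a * e2pii R q) *: u.
Proof.
move=> hw h2 hx.
have hgu : g u = (eps R a * e2pii R (- q)) *: u.
  move: hx; rewrite hxdef (wt_sig hV hw h2) (lfZ hg) => hx.
  have hx' := congr1 (fun z => eps R a *: z) hx.
  move: hx'; rewrite /= [in X in X = _]scalerA eps2 scale1r => ->; by rewrite scalerA.
rewrite -{1}[u](_ : g ((eps R a * e2pii R q) *: u) = u) ?hgK //.
rewrite (lfZ hg) hgu scalerA.
have -> : eps R a * e2pii R q * (eps R a * e2pii R (- q)) = 1.
  by rewrite mulrACA eps2 mul1r mulrC e2piiN.
by rewrite scale1r.
Qed.

Lemma key a u (r : nat) n w lam : (r < T)%N -> wtV Y om a u -> is_int (2 * a) ->
  x u = e2pii R (- (r%:Q / T%:Q)) *: u -> L w = lam *: w ->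
  F (Ym (ginv u) n w) = Ym u n (F w).
Proof.
move=> rT hw h2 hx hlw.
rewrite (Fmap_eig hL _ hlw) (ginv_eig hw h2 hx).
rewrite (lfZ (linYm1 hM n w)) (lfZ F_lin) (lfZ (linYm2 hM u n)).
case: (pselect (is_int (n - r%:Q / T%:Q))) => hn; last first.
  by rewrite (modesM hM hT rT hx hn) (lf0 F_lin) !scaler0.
rewrite (Fmap_eig hL _ (comm_L0 hV hM hT hxom rT hx hn hw h2 hlw)) scalerA.
congr (_ *: _).
set q := r%:Q / T%:Q.
have -> : a - n - 1 = a + (- (n - q) - 1) + (- q) by ring.
have hb : e2pii R (- (n - q) - 1) = 1.
  apply: e2pii_isint.
  by case: hn => k hk; exists (- k - 1); rewrite /q hk intrB intrN.
rewrite EcDrat e2piiD e2piiD hb mulr1 (e2pii_eps R h2).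
transitivity (Ec R lam * ((eps R a * eps R a) * (e2pii R (- q) * e2pii R q))).
  by ring.
by rewrite eps2 e2piiN !mulr1.
Qed.

Lemma inter_eig v n w lam : L w = lam *: w -> F (Ym (ginv v) n w) = Ym v n (F w).
Proof.
move=> hlw.
have T0 : (0 < T)%N by case: hT.
have hTid : forall v, iter T x v = v by case: hT.
pose Good v := F (Ym (ginv v) n w) = Ym v n (F w).
have G0 : Good 0.
  by rewrite /Good (lf0 ginv_lin') (Ym0 hM) (lf0 F_lin) (Ym0 hM).
have GD : forall a b, Good a -> Good b -> Good (a + b).
  move=> a b; rewrite /Good => ha hb.
  rewrite (lfD ginv_lin') (lfD (linYm1 hM n w)) (lfD F_lin) ha hb.
  by rewrite (lfD (linYm1 hM n (F w))).
have [s [hs hv]] := decV hV v.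
have -> : v = \sum_(y <- s) \sum_(r < T) Pr x T r y.2.
  by rewrite hv; apply: eq_bigr => y _; rewrite P_sum.
rewrite big_seq; apply: (big_ind Good) => // y ys.
have [h2 hwy] := hs y ys.
apply: (big_ind Good) => // r _.
have hP := P_eig x_lin T0 hTid r y.2; rewrite -!natQ in hP.
rewrite /Good; apply: (@key y.1 _ r n w lam (ltn_ord r) _ h2 hP hlw).
apply: (@P_closed R V x T (fun v => wtV Y om y.1 v)).
- exact: (wt0 hV).
- by move=> k z hz; apply: (wtZ hV).
- by move=> z1 z2 h1 h3; apply: (wtD hV).
- by move=> z hz; rewrite hxdef; apply: hgwt => //; apply: (sig_wt hV).
- exact: hwy.
Qed.

Lemma inter v n w : F (Ym (ginv v) n w) = Ym v n (F w).
Proof.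
have [s [hs ->]] := hdec w.
rewrite (lf_sum (linYm2 hM _ _)) (lf_sum F_lin) (lf_sum F_lin) (lf_sum (linYm2 hM _ _)).
apply: eq_big_seq => y ys; exact: (inter_eig _ _ (hs y ys)).
Qed.

Lemma main_iso : mod_iso (twist_by ginv Ym) Ym.
Proof.
exists F; split.
- exact: F_lin.
- exists (Fmap L (fun l => Ec R (- l))).
  + by apply: (Fmap_can hL hdec) => l; rewrite EcN.
  + by apply: (Fmap_can hL hdec) => l; rewrite mulrC EcN.
- by move=> v n w; rewrite /twist_by inter.
Qed.
End F.

Unset Implicit Arguments.

Lemma iter_sig2 (W : Type) (s : W -> W) (sK : forall v, s (s v) = v) n v :
  iter n.*2 s v = v.
Proof. by elim: n => [//|n IH]; rewrite doubleS !iterS IH sK. Qed.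

Theorem lemma6p1 (R : realType) (V : lmodType R[i])
    (Y : V -> int -> V -> V) (vac om : V) (sig : V -> V) (c : R[i]) :
  is_vosa Y vac om sig c ->
  (forall g ginv : V -> V, is_aut Y vac om g ginv -> finite_order g ->
     forall (M : lmodType R[i]) (Ym : V -> rat -> M -> M),
       twisted_module Y vac om sig (fun v => g (sig v)) Ym ->
       simple_module Ym ->
       mod_iso (twist_by ginv Ym) Ym) /\
  (forall (M : lmodType R[i]) (Ym : V -> rat -> M -> M),
     twisted_module Y vac om sig (fun v => v) Ym ->
     simple_module Ym ->
     mod_iso (twist_by sig Ym) Ym).
Proof.
move=> hV; split.
- move=> g ginv [hg hgK hginvK [hgvac hgom] hgY] [Tg hTg] M Ym hM _.
  have hgwt : forall a v, wtV Y om a v -> is_int (2 * a) -> wtV Y om a (g v).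
    by move=> a v h _; exact: (g_wt hg hgom hgY h).
  have [T hT] : exists T, is_order (fun v => g (sig v)) T.
    case: hTg => Tg0 hTgid _.
    apply: (@exists_order _ _ Tg.*2); first by rewrite double_gt0.
    move=> v; rewrite (iter_x hV hg hgom hgY) (@iter_sig2 _ _ (sigK hV)).
    by rewrite -addnn iterD !hTgid.
  exact: (main_iso hV hg hgK hginvK hgom hgwt (fun v => erefl) hM hT).
- move=> M Ym hM _.
  have hT : is_order (fun v : V => v) 1.
    by split => // k /andP[k0 k1]; move: k1; rewrite ltnS leqNgt k0.
  apply: (main_iso hV (linsig hV) (sigK hV) (sigK hV) (sig_om hV) _ _ hM hT).
  + by move=> a v h h2; exact: (sig_wt hV h h2).
  + by move=> v; rewrite (sigK hV).
Qed.
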